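(* If $\nu$ is a pseudorandom measure on $\mathbb{F}_{q^N}$, then so is $\nu_{1/2}=(\nu+1)/2$. More generally, for any $0<\alpha<1$, $\nu_\alpha=(1-\alpha)\nu+\alpha$ is also pseudorandom.
   Context: Fix a prime power $q$, $k\ge1$, $K=q^k$. $\mathbf{G}_N$ is the set of polynomials in $\mathbb{F}_q[t]$ of degree $<N$; $\mathbb{F}_{q^N}$ is $\mathbf{G}_N$ with multiplication modulo a fixed monic irreducible $f_N$ of degree $N$. A measure is a family $\nu_N:\mathbb{F}_{q^N}\to[0,\infty)$. Linear forms condition $(m_0,n_0,k_0)$: for $m\le m_0$ affine forms $\psi_i(\mathbf f)=\sum_{j=1}^nL_{ij}f_j+b_i$ in $n\le n_0$ variables with $L_{ij}\in\{a/c: a,c\in\mathbf{G}_{k_0},c\ne0\}$ and no two coefficient vectors proportional, $\mathbb{E}(\prod_i\nu(\psi_i(\mathbf f))\mid\mathbf f\in(\mathbb{F}_{q^N})^n)=1+o(1)$ as $N\to\infty$ uniformly in the $b_i$. Correlation condition $l_0$: there is $\tau:\mathbf{G}_N\to\mathbb{R}^+$ with $\mathbb{E}(\tau^p)=O_p(1)$ for all $p>1$ uniformly in $N$ such that for $l\le l_0$, $\mathbb{E}(\nu(f+h_1)\cdots\nu(f+h_l)\mid f)\le\sum_{1\le i<j\le l}\tau(h_i-h_j)$. Pseudorandom: $(K2^{K-1},3K-4,k)$-linear forms condition and $2^{K-1}$-correlation condition. *)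

(* Defs.v *)
From HB Require Import structures.
From mathcomp Require Import all_boot all_order all_algebra.
From mathcomp Require Import qpoly fraction.
From mathcomp Require Import reals exp.
Set Implicit Arguments. Unset Strict Implicit. Unset Printing Implicit Defensive.
Import Order.TTheory GRing.Theory Num.Theory.
Local Open Scope ring_scope.

(* F plays the role of F_q (q = #|F|, automatically a prime power).
   f N is the fixed monic irreducible polynomial of degree N;
   GF f N = F_q[t]/(f N), whose elements are the polynomials of degree < N
   (i.e. G_N), with multiplication modulo f N. *)
Notation GF f N := {poly %/ f N} (only parsing).

Definition Ex (R : realType) (T : finType) (g : T -> R) : R :=
  (\sum_(x : T) g x) / #|T|%:R.

Definition is_measure (F : finFieldType) (f : nat -> {poly F}) (R : realType)
  (nu : forall N, GF f N -> R) : Prop :=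
  forall N (x : GF f N), 0 <= nu N x.

(* A coefficient L = a/c is given by a pair (a, c) with a, c in G_{k0}, c <> 0. *)
Definition coef_ok (F : finFieldType) (k0 : nat) (ac : {poly F} * {poly F}) : bool :=
  [&& (size ac.1 <= k0)%N, (size ac.2 <= k0)%N & ac.2 != 0].

Definition coef_frac (F : finFieldType) (ac : {poly F} * {poly F})
  : {fraction {poly F}} :=
  FracField.tofrac ac.1 / FracField.tofrac ac.2.

Definition coef_GF (F : finFieldType) (f : nat -> {poly F}) (N : nat)
  (ac : {poly F} * {poly F}) : GF f N :=
  in_qpoly (f N) ac.1 / in_qpoly (f N) ac.2.

Definition admissible (F : finFieldType) (k0 m n : nat)
  (L : 'I_m -> 'I_n -> {poly F} * {poly F}) : Prop :=
  (forall i j, coef_ok k0 (L i j)) /\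
  (forall i, exists j, coef_frac (L i j) != 0) /\
  (forall i i', i != i' ->
     ~ exists lam : {fraction {poly F}},
         forall j, coef_frac (L i j) = lam * coef_frac (L i' j)).

Definition lin_form (F : finFieldType) (f : nat -> {poly F}) (N m n : nat)
  (L : 'I_m -> 'I_n -> {poly F} * {poly F}) (b : 'I_m -> GF f N)
  (i : 'I_m) (x : {ffun 'I_n -> GF f N}) : GF f N :=
  \sum_(j < n) coef_GF f N (L i j) * x j + b i.

Definition linear_forms_condition (F : finFieldType) (f : nat -> {poly F})
  (R : realType) (m0 n0 k0 : nat) (nu : forall N, GF f N -> R) : Prop :=
  forall (m n : nat), (m <= m0)%N -> (n <= n0)%N ->
  forall L : 'I_m -> 'I_n -> {poly F} * {poly F}, admissible k0 L ->
  forall eps : R, 0 < eps -> exists N0 : nat, forall N : nat, (N0 <= N)%N ->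
  forall b : 'I_m -> GF f N,
    `| Ex (fun x : {ffun 'I_n -> GF f N} =>
             \prod_(i < m) nu N (lin_form L b i x)) - 1 | <= eps.

Definition correlation_condition (F : finFieldType) (f : nat -> {poly F})
  (R : realType) (l0 : nat) (nu : forall N, GF f N -> R) : Prop :=
  exists tau : forall N, GF f N -> R,
    (forall N (x : GF f N), 0 <= tau N x) /\
    (forall p : R, 1 < p -> exists C : R, forall N, (0 < N)%N ->
        Ex (fun x : GF f N => powR (tau N x) p) <= C) /\
    (forall N, (0 < N)%N -> forall l : nat, (2 <= l <= l0)%N ->
       forall h : 'I_l -> GF f N,
         Ex (fun x : GF f N => \prod_(i < l) nu N (x + h i))
           <= \sum_(i < l) \sum_(j < l | (i < j)%N) tau N (h i - h j)).

Definition pseudorandom (F : finFieldType) (f : nat -> {poly F}) (R : realType)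
  (k : nat) (nu : forall N, GF f N -> R) : Prop :=
  let K := (#|F| ^ k)%N in
  [/\ is_measure nu,
      linear_forms_condition (K * 2 ^ (K - 1)) (3 * K - 4) k nu
    & correlation_condition (2 ^ (K - 1)) nu].

(* Main.v *)
Require Import Defs.
From HB Require Import structures.
From mathcomp Require Import all_boot all_order all_algebra.
From mathcomp Require Import qpoly fraction.
From mathcomp Require Import reals exp.
From mathcomp Require Import lra zify.
Set Implicit Arguments. Unset Strict Implicit. Unset Printing Implicit Defensive.
Import Order.TTheory GRing.Theory Num.Theory.
Local Open Scope ring_scope.

Definition wt (R : comNzRingType) (I : finType) (a c : R) (J : {set I}) : R :=
  \prod_i (if i \in J then a else c).

Lemma expandP0 (R : comNzRingType) (I : finType) (a c : R) (g : I -> R) :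
  \prod_i (a * g i + c) =
  \sum_(J : {set I}) wt a c J * \prod_(i in J) g i.
Proof.
rewrite bigA_distr; apply: eq_bigr => J _.
rewrite [X in _ * X]big_mkcond /wt -big_split /=.
by apply: eq_bigr => i _; case: ifP; rewrite ?mulr1.
Qed.

Lemma expandP (R : comNzRingType) (I : finType) (a c : R) (g : I -> R) :
  \prod_i (a * g i + c) =
  \sum_(J : {set I}) wt a c J * \prod_(j < #|J|) g (enum_val j).
Proof. by rewrite expandP0; apply: eq_bigr => J _; rewrite big_enum_val. Qed.

Lemma wt_sum (R : comNzRingType) (I : finType) (a c : R) :
  a + c = 1 -> \sum_(J : {set I}) wt a c J = 1.
Proof.
move=> ac; have := expandP (I:=I) a c (fun _ => 1).
rewrite mulr1 ac big1_eq => ->.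
by apply: eq_bigr => J _; rewrite big1_eq mulr1.
Qed.

Lemma wt_ge0 (R : realDomainType) (I : finType) (a c : R) (J : {set I}) :
  0 <= a -> 0 <= c -> 0 <= wt a c J.
Proof. by move=> a0 c0; apply: prodr_ge0 => i _; case: ifP. Qed.

Lemma enum_val_mono (l : nat) (J : {set 'I_l}) (i j : 'I_#|J|) :
  (i < j)%N = (enum_val i < enum_val j)%N.
Proof.
have srt : sorted (relpre val ltn) (enum J).
  rewrite /enum_mem; apply: sorted_filter; first by move=> x y z h1 h2; exact: ltn_trans h1 h2.
  by rewrite -enumT -sorted_map val_enum_ord iota_ltn_sorted.
have tr : @transitive 'I_l (relpre val ltn) by move=> x y z h1 h2; exact: ltn_trans h1 h2.
have sz : size (enum J) = #|J| by rewrite cardE.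
have hom := sorted_ltn_nth tr (enum_default i) srt.
apply/idP/idP.
  move=> ij; rewrite /enum_val.
  have := hom i j; rewrite !inE sz !ltn_ord => /(_ isT isT ij).
  by rewrite (set_nth_default (enum_default i) (enum_default j)) ?sz.
move=> h; rewrite ltnNge; apply/negP; rewrite leq_eqVlt => /orP[/eqP/val_inj ji|ji].
  by move: h; rewrite ji ltnn.
move: h; rewrite ltnNge => /negP; apply; apply: ltnW.
have := hom j i; rewrite !inE sz !ltn_ord => /(_ isT isT ji).
by rewrite /enum_val (set_nth_default (enum_default i) (enum_default j)) ?sz.
Qed.

Lemma in_qpoly1 (F : finFieldType) (h : {poly F}) : in_qpoly h 1 = 1.
Proof.
apply: val_inj; transitivity (1 : {poly F}).
  by apply: in_qpoly_small; rewrite size_poly1 size_mk_monic_gt1.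
exact: (esym (qpolyCE h 1)).
Qed.

Lemma coef_GF11 (F : finFieldType) (f : nat -> {poly F}) N :
  coef_GF f N (1, 1) = 1.
Proof. by rewrite /coef_GF /= in_qpoly1 divr1. Qed.

Section ExL.
Variables (R : realType) (T : finType).

Lemma Ex_le (g h : T -> R) : (forall x, g x <= h x) -> Ex g <= Ex h.
Proof.
move=> gh; rewrite /Ex ler_wpM2r ?invr_ge0 ?ler0n //.
by apply: ler_sum => x _; apply: gh.
Qed.

Lemma Ex_ge0 (g : T -> R) : (forall x, 0 <= g x) -> 0 <= Ex g.
Proof.
move=> g0; rewrite /Ex mulr_ge0 ?invr_ge0 ?ler0n //.
by apply: sumr_ge0 => x _; apply: g0.
Qed.

Lemma Ex_sum (I : finType) (w : I -> R) (G : I -> T -> R) :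
  Ex (fun x => \sum_i w i * G i x) = \sum_i w i * Ex (G i).
Proof.
rewrite /Ex exchange_big mulr_suml; apply: eq_bigr => i _.
by rewrite -mulr_sumr mulrA.
Qed.

Lemma Ex_cst (x0 : T) (c : R) : Ex (fun _ : T => c) = c.
Proof.
rewrite /Ex sumr_const -[#|xpredT|]/#|T| -[c *+ _]mulr_natr mulfK // pnatr_eq0 -lt0n.
by apply/card_gt0P; exists x0.
Qed.

Lemma Ex_add (g h : T -> R) : Ex (fun x => g x + h x) = Ex g + Ex h.
Proof. by rewrite /Ex big_split mulrDl. Qed.

Lemma Ex_scale (c : R) (g : T -> R) : Ex (fun x => c * g x) = c * Ex g.
Proof. by rewrite /Ex -mulr_sumr mulrA. Qed.
End ExL.

Lemma Ex_shift (R : realType) (V : finZmodType) (g : V -> R) (h : V) :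
  Ex (fun x => g (x + h)) = Ex g.
Proof.
rewrite /Ex; congr (_ / _).
rewrite [RHS](reindex_inj (addIr h)) //.
Qed.

Lemma Ex_ffun1 (R : realType) (V : finType) (g : V -> R) :
  Ex (fun x : {ffun 'I_1 -> V} => g (x ord0)) = Ex g.
Proof.
rewrite /Ex card_ffun card_ord expn1; congr (_ / _).
rewrite (reindex (fun y : V => [ffun=> y])) /=.
  by apply: eq_bigr => y _; rewrite ffunE.
exists (fun x : {ffun 'I_1 -> V} => x ord0) => x _; rewrite ?ffunE //.
by apply/ffunP => i; rewrite ffunE (ord1 i).
Qed.

Lemma Ex_ext (R : realType) (T : finType) (g h : T -> R) :
  (forall x, g x = h x) -> Ex g = Ex h.
Proof. by move=> gh; rewrite /Ex; congr (_ / _); apply: eq_bigr => x _. Qed.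

Lemma lf_mix (F : finFieldType) (f : nat -> {poly F}) (R : realType)
  (m0 n0 k0 : nat) (nu nu' : forall N, GF f N -> R) (a c : R) :
  0 <= a -> 0 <= c -> a + c = 1 -> (forall N x, nu' N x = a * nu N x + c) ->
  linear_forms_condition m0 n0 k0 nu -> linear_forms_condition m0 n0 k0 nu'.
Proof.
move=> a0 c0 ac hnu H m n mm nn L [hok [hnz hprop]] eps eps0.
have HJ : forall J : {set 'I_m}, exists N0 : nat, forall N, (N0 <= N)%N ->
   forall b : 'I_m -> GF f N,
   `|Ex (fun x : {ffun 'I_n -> GF f N} =>
        \prod_(j < #|J|) nu N (lin_form L b (enum_val j) x)) - 1| <= eps.
  move=> J.
  have JM : (#|J| <= m0)%N by rewrite (leq_trans (max_card _)) // card_ord.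
  have adm : admissible k0 (fun j : 'I_#|J| => L (enum_val j)).
    split; first by move=> i j; apply: hok.
    split; first by move=> i; apply: hnz.
    move=> i i' ii'; apply: hprop; by rewrite (inj_eq enum_val_inj).
  have [N0 HN0] := H #|J| n JM nn _ adm eps eps0.
  by exists N0 => N NN b; apply: (HN0 N NN (fun j => b (enum_val j))).
have [N0 HN0] := fin_all_exists HJ.
exists (\max_J N0 J) => N NN b.
rewrite (@Ex_ext _ _ _ (fun x => \sum_(J : {set 'I_m}) wt a c J *
   \prod_(j < #|J|) nu N (lin_form L b (enum_val j) x))); last first.
  move=> x; rewrite -(expandP a c (fun i => nu N (lin_form L b i x))).
  by apply: eq_bigr => i _; rewrite hnu.
rewrite Ex_sum -{2}(@wt_sum _ 'I_m a c ac) -sumrB.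
apply: le_trans (ler_norm_sum _ _ _) _.
apply: le_trans (_ : \sum_(J : {set 'I_m}) wt a c J * eps <= _); last first.
  by rewrite -mulr_suml wt_sum // mul1r.
apply: ler_sum => J _; rewrite -{2}[wt a c J]mulr1 -mulrBr normrM.
rewrite ger0_norm ?wt_ge0 // ler_wpM2l ?wt_ge0 //.
apply: HN0; apply: leq_trans NN; exact: leq_bigmax.
Qed.

Lemma Ebound (F : finFieldType) (f : nat -> {poly F}) (R : realType)
  (m0 n0 k0 : nat) (nu : forall N, GF f N -> R) :
  (1 <= m0)%N -> (1 <= n0)%N -> (1 <= k0)%N ->
  linear_forms_condition m0 n0 k0 nu ->
  exists M : R, 0 <= M /\ forall N, Ex (nu N) <= M.
Proof.
move=> m1 n1 k1 H.
pose L := fun (_ : 'I_1) (_ : 'I_1) => (1 : {poly F}, 1 : {poly F}).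
have adm : admissible k0 L.
  split; first by move=> i j; rewrite /coef_ok /= size_poly1 k1 oner_eq0.
  split.
    move=> i; exists ord0; rewrite /coef_frac /= rmorph1 divr1 oner_eq0 //.
  by move=> i i'; rewrite (ord1 i) (ord1 i') eqxx.
have [N0 HN0] := H 1%N 1%N m1 n1 L adm 1 ltr01.
exists (2 + \sum_(i < N0) `|Ex (nu i)|); split.
  by rewrite addr_ge0 // sumr_ge0.
move=> N; have [NN|NN] := leqP N0 N.
  have := HN0 N NN (fun _ => 0).
  rewrite (@Ex_ext _ _ _ (fun x : {ffun 'I_1 -> GF f N} => nu N (x ord0))).
    rewrite Ex_ffun1 => h.
    have h2 := ler_norm (Ex (nu N) - 1).
    have h3 : 0 <= \sum_(i < N0) `|Ex (nu i)| by rewrite sumr_ge0.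
    lra.
  move=> x; rewrite big_ord1 /lin_form big_ord1 /L coef_GF11 mul1r addr0 //.
apply: le_trans (ler_norm _) _.
rewrite (bigD1 (Ordinal NN)) //=.
have : 0 <= \sum_(i < N0 | i != Ordinal NN) `|Ex (nu i)|.
  by apply: sumr_ge0.
lra.
Qed.

Lemma sum_sub (R : realDomainType) (I : finType) (P Q : pred I) (G : I -> R) :
  (forall i, P i -> Q i) -> (forall i, 0 <= G i) ->
  \sum_(i | P i) G i <= \sum_(i | Q i) G i.
Proof.
move=> PQ G0; rewrite [X in X <= _]big_mkcond [X in _ <= X]big_mkcond.
apply: ler_sum => i _; case: ifP => Pi; first by rewrite PQ.
by case: ifP.
Qed.

Lemma sum_term (R : realDomainType) (I : finType) (P : pred I) (G : I -> R) i0 :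
  (forall i, 0 <= G i) -> P i0 -> G i0 <= \sum_(i | P i) G i.
Proof.
move=> G0 Pi0; rewrite (bigD1 i0) //= lerDl.
by apply: sumr_ge0 => i _.
Qed.

Lemma pairs_le (R : realDomainType) (l : nat) (J : {set 'I_l})
  (G : 'I_l -> 'I_l -> R) : (forall i j, 0 <= G i j) ->
  \sum_(i < #|J|) \sum_(j < #|J| | (i < j)%N) G (enum_val i) (enum_val j)
  <= \sum_(i < l) \sum_(j < l | (i < j)%N) G i j.
Proof.
move=> G0.
have -> : \sum_(i < #|J|) \sum_(j < #|J| | (i < j)%N) G (enum_val i) (enum_val j)
  = \sum_(i < #|J|) \sum_(y in J | (enum_val i < y)%N) G (enum_val i) y.
  apply: eq_bigr => i _.
  rewrite (big_enum_val_cond (fun y : 'I_l => (enum_val i < y)%N)).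
  by apply: eq_bigl => j; rewrite enum_val_mono.
rewrite -(big_enum_val (fun x : 'I_l => \sum_(y in J | (x < y)%N) G x y)).
apply: le_trans (_ : \sum_(x in J) \sum_(y < l | (x < y)%N) G x y <= _).
  apply: ler_sum => x _; apply: sum_sub => // y /andP[] //.
rewrite [X in X <= _]big_mkcond; apply: ler_sum => x _.
by case: ifP => // _; apply: sumr_ge0 => y _.
Qed.

Lemma pow_bound (R : realType) (t K p : R) : 0 <= t -> 0 <= K -> 0 <= p ->
  (t + K) `^ p <= 2 `^ p * (t `^ p + K `^ p).
Proof.
move=> t0 K0 p0.
have h1 : 0 <= t `^ p by apply: powR_ge0.
have h2 : 0 <= K `^ p by apply: powR_ge0.
have h3 : 0 <= 2 `^ p :> R by apply: powR_ge0.
have [tK|Kt] := leP t K.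
  apply: le_trans (_ : (2 * K) `^ p <= _).
    apply: ge0_ler_powR => //; rewrite ?nnegrE; lra.
  rewrite powRM //; first (apply: ler_wpM2l => //; lra).
apply: le_trans (_ : (2 * t) `^ p <= _).
  apply: ge0_ler_powR => //; rewrite ?nnegrE; lra.
rewrite powRM //; first (apply: ler_wpM2l => //; lra).
Qed.

Lemma corr_mix (F : finFieldType) (f : nat -> {poly F}) (R : realType)
  (l0 : nat) (nu nu' : forall N, GF f N -> R) (a c M : R) :
  0 <= a -> 0 <= c -> a + c = 1 -> (forall N x, nu' N x = a * nu N x + c) ->
  0 <= M -> (forall N, Ex (nu N) <= M) ->
  correlation_condition l0 nu -> correlation_condition l0 nu'.
Proof.
move=> a0 c0 ac hnu M0 hM [tau [tau0 [taup taucorr]]].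
exists (fun N x => tau N x + (1 + M)); split.
  by move=> N x; rewrite addr_ge0 // addr_ge0.
split.
  move=> p p1; have [C HC] := taup p p1.
  exists (2 `^ p * (C + (1 + M) `^ p)) => N N0.
  apply: le_trans (_ : Ex (fun x : GF f N => 2 `^ p * (powR (tau N x) p + (1 + M) `^ p)) <= _).
    apply: Ex_le => x; apply: pow_bound => //; [lra | lra].
  rewrite Ex_scale Ex_add (Ex_cst 0) ler_wpM2l ?powR_ge0 // lerD2r.
  exact: HC.
move=> N N0 l hl h.
set T := \sum_(i < l) \sum_(j < l | (i < j)%N) tau N (h i - h j).
have T0 : 0 <= T by apply: sumr_ge0 => i _; apply: sumr_ge0 => j _.
rewrite (@Ex_ext _ _ _ (fun x => \sum_(J : {set 'I_l}) wt a c J *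
   \prod_(i in J) nu N (x + h i))); last first.
  move=> x; rewrite -(expandP0 a c (fun i => nu N (x + h i))).
  by apply: eq_bigr => i _; rewrite hnu.
rewrite Ex_sum.
apply: le_trans (_ : \sum_(J : {set 'I_l}) wt a c J * (T + (1 + M)) <= _).
  apply: ler_sum => J _; apply: ler_wpM2l; first exact: wt_ge0.
  have [J2|J2] := leqP 2 #|J|.
    rewrite (@Ex_ext _ _ _ (fun x => \prod_(j < #|J|) nu N (x + h (enum_val j))));
      last by move=> x; rewrite big_enum_val.
    have hl' : (2 <= #|J| <= l0)%N.
      rewrite J2 /=; apply: leq_trans (_ : (l <= l0)%N); last by case/andP: hl.
      by rewrite (leq_trans (max_card _)) // card_ord.
    apply: le_trans (taucorr N N0 #|J| hl' (fun j => h (enum_val j))) _.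
    apply: le_trans (_ : T <= _); last by lra.
    by apply: (@pairs_le R l J (fun i j => tau N (h i - h j))) => i j; apply: tau0.
  move: J2; rewrite ltnS leq_eqVlt ltnS leqn0 => /orP[/cards1P[i0 ->]|/eqP/cards0_eq ->].
    rewrite (@Ex_ext _ _ _ (fun x => nu N (x + h i0))); last first.
      by move=> x; rewrite big_set1.
    rewrite (Ex_shift (nu N)); have := hM N; lra.
  rewrite (@Ex_ext _ _ _ (fun x => 1)); last by move=> x; rewrite big_set0.
  rewrite (Ex_cst 0); lra.
rewrite -mulr_suml wt_sum // mul1r.
have l2 : (2 <= l)%N by case/andP: hl.
have -> : \sum_(i < l) \sum_(j < l | (i < j)%N) (tau N (h i - h j) + (1 + M))
  = T + \sum_(i < l) \sum_(j < l | (i < j)%N) (1 + M).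
  by rewrite /T -big_split /=; apply: eq_bigr => i _; rewrite big_split.
apply: lerD => //.
have l0' : (0 < l)%N by apply: ltnW.
have K0 : 0 <= 1 + M by lra.
apply: le_trans (sum_term (P := predT) (i0 := Ordinal l0') _ _) => //=; last first.
  by move=> i; apply: sumr_ge0.
by apply: (sum_term (i0 := Ordinal l2)).
Qed.

Lemma pr_mix (F : finFieldType) (f : nat -> {poly F}) (R : realType) (k : nat)
  (nu nu' : forall N, GF f N -> R) (a c : R) :
  (1 <= k)%N -> 0 <= a -> 0 <= c -> a + c = 1 ->
  (forall N x, nu' N x = a * nu N x + c) ->
  pseudorandom k nu -> pseudorandom k nu'.
Proof.
move=> k1 a0 c0 ac hnu [hm hlf hcorr].
set K := (#|F| ^ k)%N.
have K2 : (2 <= K)%N.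
  apply: leq_trans (card_finNzRing_gt1 F) _.
  by rewrite /K -{1}(expn1 #|F|) leq_pexp2l // ltnW // card_finNzRing_gt1.
have e2 : (0 < 2 ^ (K - 1))%N by rewrite expn_gt0.
have m1 : (1 <= K * 2 ^ (K - 1))%N by rewrite muln_gt0 e2 andbT; lia.
have n1 : (1 <= 3 * K - 4)%N by lia.
have [M [M0 hM]] := Ebound m1 n1 k1 hlf.
split.
- move=> N x; rewrite hnu; apply: addr_ge0 => //; apply: mulr_ge0 => //.
- exact: lf_mix hnu hlf.
- exact: corr_mix hnu M0 hM hcorr.
Qed.

Theorem mainTheorem11 (F : finFieldType) (R : realType) (k : nat)
  (f : nat -> {poly F})
  (hk : (1 <= k)%N)
  (hf : forall N : nat, (0 < N)%N ->
          [/\ f N \is monic, irreducible_poly (f N) & size (f N) = N.+1])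
  (nu : forall N : nat, GF f N -> R) :
  @pseudorandom F f R k nu ->
  @pseudorandom F f R k (fun N x => (nu N x + 1) / 2) /\
  (forall alpha : R, 0 < alpha < 1 ->
     @pseudorandom F f R k (fun N x => (1 - alpha) * nu N x + alpha)).
Proof.
move=> H; split.
  apply: (pr_mix (a := 1/2) (c := 1/2) hk _ _ _ _ H); try lra.
  by move=> N x /=; lra.
move=> alpha /andP[a0 a1].
apply: (pr_mix (a := 1 - alpha) (c := alpha) hk _ _ _ _ H); try lra.
by [].
Qed.
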